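(* Let $H$ be a maximal outerplanar graph of diameter $3$ with maximum degree $\Delta=\Delta(H)$, containing vertices $v_0,v_1,\dots,v_5$ which induce a copy of $G_6^1$ (with edges $v_1v_0, v_0v_4, v_4v_3, v_3v_5, v_5v_2, v_2v_1, v_0v_2, v_0v_3, v_2v_3$), and such that $d(v_0)=d(v_2)=d(v_3)=\Delta$. Then $\chi'_{st}(H)\ge \Delta+2$.
   Context: A star edge coloring of a graph $G$ is a proper edge coloring of $G$ in which no path or cycle with four edges is bichromatic. The star chromatic index $\chi'_{st}(G)$ is the minimum number of colors in a star edge coloring of $G$. An outerplanar graph is a graph drawable in the plane without crossings with all vertices on the outer face; it is maximal outerplanar if adding any edge between two nonadjacent vertices yields a non-outerplanar graph. $d(v)$ is the degree of $v$ in $H$. (In the paper this graph is denoted $H_{n_\Delta}$.) *)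

(* Defs.v *)
From mathcomp Require Import all_boot.
Set Implicit Arguments. Unset Strict Implicit. Unset Printing Implicit Defensive.

Definition simple_graph (T : finType) (e : rel T) : Prop :=
  symmetric e /\ irreflexive e.

Definition deg (T : finType) (e : rel T) (x : T) : nat := #|[set y | e x y]|.

Definition max_deg (T : finType) (e : rel T) : nat := \max_(x : T) deg e x.

Fixpoint walk_le (T : finType) (e : rel T) (k : nat) (x y : T) : bool :=
  match k with
  | 0 => x == y
  | k'.+1 => walk_le e k' x y || [exists z, e x z && walk_le e k' z y]
  end.

Definition diameter_eq (T : finType) (e : rel T) (d : nat) : Prop :=
  (forall x y : T, walk_le e d x y) /\
  (exists x y : T, ~~ walk_le e d.-1 x y) /\ 0 < d.

(* Outerplanarity, combinatorially: the vertices can be placed in convex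
   position (injective labelling f along a circle) so that no two edges,
   drawn as chords, cross.  Two chords xy and uv with four distinct ends
   cross iff exactly one of u, v lies strictly between x and y. *)
Definition strictly_between (T : finType) (f : T -> nat) (x y w : T) : bool :=
  (minn (f x) (f y) < f w) && (f w < maxn (f x) (f y)).

Definition outerplanar (T : finType) (e : rel T) : Prop :=
  exists f : T -> nat, injective f /\
    forall x y u v : T, e x y -> e u v -> uniq [:: x; y; u; v] ->
      strictly_between f x y u = strictly_between f x y v.

Definition add_edge (T : finType) (e : rel T) (u v : T) : rel T :=
  fun x y => [|| e x y, (x == u) && (y == v) | (x == v) && (y == u)].

Definition maximal_outerplanar (T : finType) (e : rel T) : Prop :=
  outerplanar e /\
  forall u v : T, u != v -> ~~ e u v -> ~ outerplanar (add_edge e u v).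

Definition edge_coloring (T : finType) (e : rel T) (k : nat)
    (col : T -> T -> 'I_k) : Prop :=
  forall x y, e x y -> col x y = col y x.

Definition proper_edge_coloring (T : finType) (e : rel T) (k : nat)
    (col : T -> T -> 'I_k) : Prop :=
  edge_coloring e col /\
  forall x y z, e x y -> e x z -> y != z -> col x y != col x z.

(* Star edge coloring: proper, and no path or cycle with four edges
   v0 v1 v2 v3 v4 (v0..v3 distinct, v4 distinct from v1..v3, v4 = v0
   allowed for a cycle) is bichromatic (uses at most two colors). *)
Definition star_edge_coloring (T : finType) (e : rel T) (k : nat)
    (col : T -> T -> 'I_k) : Prop :=
  proper_edge_coloring e col /\
  forall v0 v1 v2 v3 v4 : T,
    uniq [:: v0; v1; v2; v3] -> uniq [:: v1; v2; v3; v4] ->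
    e v0 v1 -> e v1 v2 -> e v2 v3 -> e v3 v4 ->
    2 < size (undup [:: col v0 v1; col v1 v2; col v2 v3; col v3 v4]).

Definition star_edge_colorable (T : finType) (e : rel T) (k : nat) : Prop :=
  exists col : T -> T -> 'I_k, star_edge_coloring e col.

(* Main.v *)
Require Import Defs.
From mathcomp Require Import all_boot.
Set Implicit Arguments. Unset Strict Implicit. Unset Printing Implicit Defensive.

Lemma undup_alt (k : nat) (a b : 'I_k) :
  size (undup [:: a; b; a; b]) <= 2.
Proof.
case: (eqVneq a b) => [->|ne] /=; rewrite !inE ?eqxx //=.
by rewrite !orbT (negbTE ne).
Qed.

Definition cols (T : finType) (e : rel T) k (col : T -> T -> 'I_k) x :=
  col x @: [set z | e x z].

Lemma cols_card (T : finType) (e : rel T) k (col : T -> T -> 'I_k) x :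
  proper_edge_coloring e col -> #|cols e col x| = deg e x.
Proof.
move=> [_ pr]; rewrite /cols card_in_imset // => y z.
rewrite !inE => hy hz eq; apply/eqP; apply/negPn/negP => ne.
by move: (pr x y z hy hz ne); rewrite eq eqxx.
Qed.

Lemma cols_full (T : finType) (e : rel T) k (col : T -> T -> 'I_k) x b g :
  proper_edge_coloring e col -> k <= (deg e x).+1 ->
  b \notin cols e col x -> g != b -> g \in cols e col x.
Proof.
move=> pc hk hb hg.
have : b |: cols e col x == setT.
  rewrite eqEcard subsetT cardsT card_ord cardsU1 hb cols_card //.
by move/eqP/setP/(_ g); rewrite !inE (negbTE hg).
Qed.

Lemma prinj (T : finType) (e : rel T) k (col : T -> T -> 'I_k) x y z :
  proper_edge_coloring e col -> e x y -> e x z -> col x y = col x z -> y = z.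
Proof.
move=> [_ pr] hy hz eq; apply/eqP; apply/negPn/negP => ne.
by move: (pr x y z hy hz ne); rewrite eq eqxx.
Qed.

Lemma lemF (T : finType) (e : rel T) k (col : T -> T -> 'I_k) x y w :
  simple_graph e -> star_edge_coloring e col ->
  x != y -> x != w -> y != w ->
  e x y -> e y w -> e x w ->
  col y w \in cols e col x -> col x y \notin cols e col w.
Proof.
move=> [sy ir] [pc st] nxy nxw nyw exy eyw exw.
have ec := pc.1.
move=> /imsetP[p]; rewrite inE => exp hp.
apply/negP => /imsetP[z]; rewrite inE => ewz hz.
have hpx : e p x by rewrite sy.
have eyx : e y x by rewrite sy.
have ewx : e w x by rewrite sy.
have ewy : e w y by rewrite sy.
have := st p x y w z.
rewrite (ec _ _ hpx) -hp -hz.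
have np_x : p != x by apply/eqP => E; move: (ir x); rewrite -{2}E exp.
have nz_w : z != w by apply/eqP => E; move: (ir w); rewrite -{2}E ewz.
have np_y : p != y.
  apply/eqP => E; subst p; rewrite (ec _ _ exy) in hp.
  by move/eqP: (prinj pc eyx eyw (esym hp)); rewrite (negbTE nxw).
have np_w : p != w.
  apply/eqP => E; subst p; rewrite (ec _ _ exw) (ec _ _ eyw) in hp.
  by move/eqP: (prinj pc ewx ewy (esym hp)); rewrite (negbTE nxy).
have nz_x : z != x.
  apply/eqP => E; subst z; rewrite (ec _ _ ewx) in hz.
  by move/eqP: (prinj pc exw exy (esym hz)); rewrite eq_sym (negbTE nyw).
have nz_y : z != y.
  apply/eqP => E; subst z; rewrite (ec _ _ ewy) (ec _ _ exy) in hz.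
  by move/eqP: (prinj pc eyw eyx (esym hz)); rewrite eq_sym (negbTE nxw).
rewrite /= !inE !negb_or.
rewrite np_x np_y np_w nxy nxw nyw (eq_sym y z) (eq_sym w z) (eq_sym x z) nz_w nz_x nz_y /=.
move=> /(_ isT isT hpx exy eyw ewz).
by rewrite !eqxx !orbT; case: ifP.
Qed.

Lemma lemL (T : finType) (e : rel T) k (col : T -> T -> 'I_k) x y w o :
  simple_graph e -> star_edge_coloring e col ->
  x != y -> x != w -> y != w -> o != x -> o != y -> o != w ->
  e x y -> e y w -> e x w -> e y o -> e w o ->
  k <= (deg e y).+1 -> k <= (deg e w).+1 ->
  col x w \notin cols e col y -> col x y \notin cols e col w -> False.
Proof.
move=> [sy ir] [pc st] nxy nxw nyw nox noy now exy eyw exw eyo ewo ky kw hy hw.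
have ec := pc.1.
have eyx : e y x by rewrite sy.
have ewx : e w x by rewrite sy.
have ewy : e w y by rewrite sy.
have eoy : e o y by rewrite sy.
have eow : e o w by rewrite sy.
have /imsetP[z] : col y o \in cols e col w.
  apply: (cols_full pc kw hw); apply/eqP => E.
  rewrite (ec _ _ exy) in E; move/eqP: (prinj pc eyo eyx E).
  by rewrite (negbTE nox).
rewrite inE => ewz hz.
have /imsetP[z'] : col w o \in cols e col y.
  apply: (cols_full pc ky hy); apply/eqP => E.
  rewrite (ec _ _ exw) in E; move/eqP: (prinj pc ewo ewx E).
  by rewrite (negbTE nox).
rewrite inE => eyz hz'.
have ezw : e z w by rewrite sy.
have := st z w o y z'.
rewrite (ec _ _ ezw) (ec _ _ eoy) -hz -hz'.
have nz_w : z != w by apply/eqP => E; move: (ir w); rewrite -{2}E ewz.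
have nz'_y : z' != y by apply/eqP => E; move: (ir y); rewrite -{2}E eyz.
have nz_o : z != o.
  apply/eqP => E; subst z; rewrite (ec _ _ ewo) (ec _ _ eyo) in hz.
  by move/eqP: (prinj pc eow eoy (esym hz)); rewrite eq_sym (negbTE nyw).
have nz_y : z != y.
  apply/eqP => E; subst z; rewrite (ec _ _ ewy) in hz.
  by move/eqP: (prinj pc eyw eyo (esym hz)); rewrite eq_sym (negbTE now).
have nz'_o : z' != o.
  apply/eqP => E; subst z'; rewrite (ec _ _ ewo) (ec _ _ eyo) in hz'.
  by move/eqP: (prinj pc eoy eow (esym hz')); rewrite (negbTE nyw).
have nz'_w : z' != w.
  apply/eqP => E; subst z'; rewrite (ec _ _ eyw) in hz'.
  by move/eqP: (prinj pc ewy ewo (esym hz')); rewrite eq_sym (negbTE noy).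
rewrite /= !inE !negb_or.
rewrite nz_w nz_o nz_y (eq_sym y z') (eq_sym o z') (eq_sym w z') nz'_y nz'_o nz'_w (eq_sym w o) (eq_sym w y) (eq_sym o y) now nyw (eq_sym y o) noy /=.
move=> /(_ isT isT ezw ewo eoy eyz).
by rewrite !eqxx !orbT; case: ifP.
Qed.

Ltac neqtac U := let E := fresh "E" in apply/eqP; intro E; move: U; rewrite E /= !inE !eqxx /= ?orbT ?andbF.

Theorem theorem3p4 (T : finType) (e : rel T) (v0 v1 v2 v3 v4 v5 : T) :
  simple_graph e ->
  maximal_outerplanar e ->
  diameter_eq e 3 ->
  uniq [:: v0; v1; v2; v3; v4; v5] ->
  (* edges of G_6^1 *)
  e v1 v0 -> e v0 v4 -> e v4 v3 -> e v3 v5 -> e v5 v2 -> e v2 v1 ->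
  e v0 v2 -> e v0 v3 -> e v2 v3 ->
  (* non-edges (induced copy) *)
  ~~ e v0 v5 -> ~~ e v1 v3 -> ~~ e v1 v4 -> ~~ e v1 v5 ->
  ~~ e v2 v4 -> ~~ e v4 v5 ->
  deg e v0 = max_deg e -> deg e v2 = max_deg e -> deg e v3 = max_deg e ->
  forall k : nat, star_edge_colorable e k -> max_deg e + 2 <= k.
Proof.
move=> sg _ _ U e10 e04 e43 e35 e52 e21 e02 e03 e23 _ _ _ _ _ _ d0 d2 d3 k [col sc].
rewrite leqNgt; apply/negP => hk.
have k0 : k <= (deg e v0).+1 by rewrite d0 -ltnS -addn2.
have k2 : k <= (deg e v2).+1 by rewrite d2 -ltnS -addn2.
have k3 : k <= (deg e v3).+1 by rewrite d3 -ltnS -addn2.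
have sy := sg.1.
have ec := sc.1.1.
have n02 : v0 != v2 by neqtac U.
have n03 : v0 != v3 by neqtac U.
have n23 : v2 != v3 by neqtac U.
have n10 : v1 != v0 by neqtac U.
have n12 : v1 != v2 by neqtac U.
have n13 : v1 != v3 by neqtac U.
have n40 : v4 != v0 by neqtac U.
have n42 : v4 != v2 by neqtac U.
have n43 : v4 != v3 by neqtac U.
have n50 : v5 != v0 by neqtac U.
have n52 : v5 != v2 by neqtac U.
have n53 : v5 != v3 by neqtac U.
have e20 : e v2 v0 by rewrite sy.
have e30 : e v3 v0 by rewrite sy.
have e32 : e v3 v2 by rewrite sy.
have e01 : e v0 v1 by rewrite sy.
have e12 : e v1 v2 by rewrite sy.
have e25 : e v2 v5 by rewrite sy.
have e34 : e v3 v4 by rewrite sy.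
have n20 : v2 != v0 by rewrite eq_sym.
have n30 : v3 != v0 by rewrite eq_sym.
have n32 : v3 != v2 by rewrite eq_sym.
have c20 := ec _ _ e20. have c30 := ec _ _ e30. have c32 := ec _ _ e32.
case: (boolP (col v2 v3 \in cols e col v0)) => A.
  have nC := lemF sg sc n02 n03 n23 e02 e23 e03 A.
  have : col v3 v2 \in cols e col v0 by rewrite c32.
  move=> /(lemF sg sc n03 n02 n32 e03 e32 e02) nB.
  exact: (lemL sg sc n02 n03 n23 n50 n52 n53 e02 e23 e03 e25 e35 k2 k3 nB nC).
case: (boolP (col v0 v3 \in cols e col v2)) => B.
  have nC := lemF sg sc n20 n23 n03 e20 e03 e23 B.
  exact: (lemL sg sc n20 n23 n03 n42 n40 n43 e20 e03 e23 e04 e34 k0 k3 A nC).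
have nB : col v3 v0 \notin cols e col v2 by rewrite c30.
have nA : col v3 v2 \notin cols e col v0 by rewrite c32.
exact: (lemL sg sc n30 n32 n02 n13 n10 n12 e30 e02 e32 e01 e21 k0 k2 nA nB).
Qed.
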